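(* Let $p_1,\dots,p_n\ge0$ with $\sum_ip_i=1$, integers $1\le d_1<d_2<\dots<d_n$ with $\sum_ip_id_i>1$, and let $j=\min\{i:p_i>0\}$. For $\lambda\in(0,1)$ let $\bar F_\lambda$ solve $\bar F'(w)=\lambda\sum_ip_i\bar F(w)^{d_i}-\bar F(w)$, $\bar F(0)=\lambda$, let $\mathbb E[W_\lambda]=\sum_ip_i\int_0^\infty\bar F_\lambda(w)^{d_i}dw$ and $p_\lambda=1-\sum_ip_i\lambda^{d_i}$. Then $$\lim_{\lambda\to0^+}-\frac{\mathbb E[W_\lambda]}{\log(p_\lambda)}=\frac1{d_j}\qquad\text{and}\qquad\lim_{\lambda\to1^-}-\frac{\mathbb E[W_\lambda]}{\log(p_\lambda)}=\frac1{\sum_ip_id_i-1}.$$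
   Context: This is the LL($d_1,\dots,d_n,p_1,\dots,p_n$) policy with exponential(1) job sizes; $p_\lambda$ is the probability that a job is assigned to an idle server. *)

(* Defs.v *)
From Stdlib Require Import Reals.
From Coquelicot Require Import Coquelicot.
Open Scope R_scope.

(* sumI n f = f 0 + f 1 + ... + f (n-1)  (indices 0..n-1 stand for 1..n of the paper) *)
Fixpoint sumI (n : nat) (f : nat -> R) : R :=
  match n with
  | O => 0
  | S k => sumI k f + f k
  end.

Definition EW (n : nat) (p : nat -> R) (d : nat -> nat) (Fbar : R -> R) : R :=
  sumI n (fun i => p i * RInt_gen (fun w => Fbar w ^ d i)
                                  (at_point 0) (Rbar_locally p_infty)).

Definition plam (n : nat) (p : nat -> R) (d : nat -> nat) (lam : R) : R :=
  1 - sumI n (fun i => p i * lam ^ d i).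

(* Main.v *)
Require Import Defs.
From Stdlib Require Import Reals Lra Lia Classical.
From Coquelicot Require Import Coquelicot.
Open Scope R_scope.

Lemma sumI_ext n f g : (forall i, (i < n)%nat -> f i = g i) -> sumI n f = sumI n g.
Proof. induction n; simpl; intros H; auto. rewrite IHn; [rewrite H|]; auto; intros; apply H; lia. Qed.

Lemma sumI_le n f g : (forall i, (i < n)%nat -> f i <= g i) -> sumI n f <= sumI n g.
Proof. induction n; simpl; intros H; [lra|]. assert (sumI n f <= sumI n g) by (apply IHn; intros; apply H; lia).
  assert (f n <= g n) by (apply H; lia). lra. Qed.

Lemma sumI_lin n a b f g : sumI n (fun i => a * f i + b * g i) = a * sumI n f + b * sumI n g.
Proof. induction n; simpl; [ring|]. rewrite IHn; ring. Qed.

Lemma sumI_scal n a f : sumI n (fun i => a * f i) = a * sumI n f.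
Proof. induction n; simpl; [ring|]. rewrite IHn; ring. Qed.

Lemma sumI_plus n f g : sumI n (fun i => f i + g i) = sumI n f + sumI n g.
Proof. induction n; simpl; [ring|]. rewrite IHn; ring. Qed.

Lemma sumI_single n f j : (j < n)%nat -> (forall i, (i < n)%nat -> i <> j -> f i = 0) -> sumI n f = f j.
Proof. induction n; simpl; intros Hj H; [lia|].
  destruct (Nat.eq_dec j n) as [->|Hne].
  - rewrite (sumI_ext n f (fun _ => 0)). { clear. induction n; simpl; lra. }
    intros; apply H; lia.
  - rewrite IHn; [|lia|intros; apply H; lia]. rewrite (H n); [lra|lia|lia]. Qed.

Lemma sumI_cont n (f : nat -> R -> R) x : (forall i, (i < n)%nat -> continuity_pt (f i) x) ->
  continuity_pt (fun y => sumI n (fun i => f i y)) x.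
Proof. induction n; simpl; intros H.
  - apply continuity_pt_const; intros a b; auto.
  - apply (continuity_pt_plus (fun y => sumI n (fun i => f i y)) (f n)); [apply IHn; intros; apply H; lia| apply H; lia]. Qed.

Lemma pow_cont k x : continuity_pt (fun y => y ^ k) x.
Proof. apply derivable_continuous_pt. apply derivable_pt_pow. Qed.


Lemma sumI_minus n f g : sumI n (fun i => f i - g i) = sumI n f - sumI n g.
Proof. induction n; simpl; [ring|]. rewrite IHn; ring. Qed.

Definition HypP n p d := (forall i, (i<n)%nat -> 0 <= p i) /\ sumI n p = 1 /\ (forall i, (i<n)%nat -> (1 <= d i)%nat).
Definition qf n p d x := sumI n (fun i => p i * x ^ pred (d i)).
Definition gf n p d x := sumI n (fun i => p i * x ^ d i).
Definition mq n p d := sumI n (fun i => p i * INR (pred (d i))).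
Definition S2 n p d := sumI n (fun i => p i * (INR (pred (d i)))^2).

Lemma pow_01 x k : 0 <= x <= 1 -> 0 <= x ^ k <= 1.
Proof. intros H. induction k; simpl; [lra|]. split; nra. Qed.

Lemma pow_abs1 x k : -1 <= x <= 1 -> -1 <= x ^ k <= 1.
Proof. intros H. induction k; simpl; [lra|]. split; nra. Qed.

Lemma pow_mono x y k : 0 <= x <= y -> x ^ k <= y ^ k.
Proof. intros H. induction k; simpl; [lra|]. assert (0 <= x ^ k) by (apply pow_le; lra). nra. Qed.

Lemma bern x k : 0 <= x <= 1 -> 1 - x ^ k <= INR k * (1 - x).
Proof. intros H. induction k; [simpl; lra|]. cbn [pow]. rewrite S_INR.
  destruct (pow_01 x k H). nra. Qed.

Lemma bern2 x k : 0 <= x <= 1 -> (1 - x) * INR k * x ^ k <= 1 - x ^ k.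
Proof. intros H. induction k; [simpl; lra|]. cbn [pow]. rewrite S_INR.
  destruct (pow_01 x k H). assert (0 <= INR k) by apply pos_INR.
  assert (0 <= (1 - x) * (INR k + 1) * x ^ k) by (apply Rmult_le_pos; [apply Rmult_le_pos|]; lra).
  assert ((1 - x) * (INR k + 1) * (x * x ^ k) <= (1 - x) * (INR k + 1) * x ^ k) by nra. nra. Qed.


Lemma hp_nn n p d : HypP n p d -> forall i, (i<n)%nat -> 0 <= p i.
Proof. intros [H _]; exact H. Qed.

Lemma qf_g n p d x : HypP n p d -> x * qf n p d x = gf n p d x.
Proof. intros [_ [_ H]]. unfold qf, gf. rewrite <- sumI_scal. apply sumI_ext; intros i Hi.
  specialize (H i Hi). destruct (d i) as [|k]; [lia|]. simpl. ring. Qed.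

Lemma qf_01 n p d x : HypP n p d -> 0 <= x <= 1 -> 0 <= qf n p d x <= 1.
Proof. intros [Hp [Hs _]] Hx. unfold qf. split.
  - apply Rle_trans with (sumI n (fun _ => 0)). { clear. induction n; simpl; lra. }
    apply sumI_le; intros i Hi. destruct (pow_01 x (pred (d i)) Hx). specialize (Hp i Hi); nra.
  - rewrite <- Hs. apply sumI_le; intros i Hi. destruct (pow_01 x (pred (d i)) Hx). specialize (Hp i Hi); nra. Qed.

Lemma qf_abs1 n p d x : HypP n p d -> -1 <= x <= 1 -> -1 <= qf n p d x <= 1.
Proof. intros [Hp [Hs _]] Hx. unfold qf. split.
  - apply Rle_trans with (sumI n (fun i => - p i)). { rewrite <- (Rmult_1_l (sumI n p)) in Hs.
      rewrite (sumI_ext n (fun i => - p i) (fun i => (-1) * p i)) by (intros; ring). rewrite sumI_scal. lra. }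
    apply sumI_le; intros i Hi. destruct (pow_abs1 x (pred (d i)) Hx). specialize (Hp i Hi); nra.
  - rewrite <- Hs. apply sumI_le; intros i Hi. destruct (pow_abs1 x (pred (d i)) Hx). specialize (Hp i Hi); nra. Qed.

Lemma qf_cont n p d x : continuity_pt (qf n p d) x.
Proof. unfold qf. apply (sumI_cont n (fun i y => p i * y ^ pred (d i))). intros i _.
  apply (continuity_pt_mult (fun _ => p i) (fun y => y ^ pred (d i))).
  apply continuity_pt_const; intros a b; auto. apply pow_cont. Qed.

Lemma qf_mono n p d x y : HypP n p d -> 0 <= x <= y -> qf n p d x <= qf n p d y.
Proof. intros [Hp _] Hx. unfold qf. apply sumI_le; intros i Hi. specialize (Hp i Hi).
  assert (x ^ pred (d i) <= y ^ pred (d i)) by (apply pow_mono; lra). nra. Qed.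

Lemma one_m_qf n p d x : HypP n p d -> 1 - qf n p d x = sumI n (fun i => p i * (1 - x ^ pred (d i))).
Proof. intros [_ [Hs _]]. rewrite (sumI_ext n _ (fun i => p i - p i * x ^ pred (d i))) by (intros; ring).
  rewrite sumI_minus, Hs. reflexivity. Qed.

Lemma qf_up n p d x : HypP n p d -> 0 <= x <= 1 -> 1 - qf n p d x <= mq n p d * (1 - x).
Proof. intros H Hx. rewrite one_m_qf by auto. unfold mq. rewrite Rmult_comm, <- sumI_scal.
  apply sumI_le; intros i Hi. pose proof (hp_nn _ _ _ H i Hi). pose proof (bern x (pred (d i)) Hx). nra. Qed.

Lemma qf_low n p d x : HypP n p d -> 0 <= x <= 1 ->
  (1 - x) * (mq n p d - (1 - x) * S2 n p d) <= 1 - qf n p d x.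
Proof. intros H Hx. rewrite one_m_qf by auto. unfold mq, S2.
  rewrite <- sumI_scal, <- sumI_minus, <- sumI_scal.
  apply sumI_le; intros i Hi. pose proof (hp_nn _ _ _ H i Hi).
  pose proof (bern x (pred (d i)) Hx). pose proof (bern2 x (pred (d i)) Hx).
  assert (0 <= INR (pred (d i))) by apply pos_INR.
  assert (0 <= (1 - x) * INR (pred (d i))) by (apply Rmult_le_pos; lra).
  assert ((1 - x) * INR (pred (d i)) * (1 - INR (pred (d i)) * (1 - x)) <= (1 - x) * INR (pred (d i)) * x ^ pred (d i)) by (apply Rmult_le_compat_l; lra).
  assert ((1 - x) * (INR (pred (d i)) - (1-x) * INR (pred (d i)) ^ 2) <= 1 - x ^ pred (d i)) by nra.
  nra. Qed.

Lemma mq_eq n p d : HypP n p d -> mq n p d = sumI n (fun i => p i * INR (d i)) - 1.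
Proof. intros [_ [Hs Hd]]. unfold mq. rewrite <- Hs, <- sumI_minus. apply sumI_ext; intros i Hi.
  specialize (Hd i Hi). destruct (d i) as [|k]; [lia|]. simpl pred. rewrite S_INR. ring. Qed.

Lemma S2_nn n p d : HypP n p d -> 0 <= S2 n p d.
Proof. intros H. unfold S2. apply Rle_trans with (sumI n (fun _ => 0)). { clear. induction n; simpl; lra. }
  apply sumI_le; intros i Hi. pose proof (hp_nn _ _ _ H i Hi). nra. Qed.


Lemma cont_delta f x : continuity_pt f x -> f x > 0 -> exists del, del > 0 /\ forall y, Rabs (y - x) < del -> f y > 0.
Proof. intros Hc Hpos. destruct (proj1 (continuity_pt_locally f x) Hc (mkposreal _ Hpos)) as [e He].
  exists e. split; [apply cond_pos|]. intros y Hy. specialize (He y Hy). simpl in He.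
  apply Rabs_lt_between in He. lra. Qed.

Lemma first_cross (phi : R -> R) w1 : 0 <= w1 -> (forall w, 0 <= w -> continuity_pt phi w) ->
  phi 0 > 0 -> phi w1 <= 0 ->
  exists t, 0 <= t <= w1 /\ phi t <= 0 /\ forall s, 0 <= s < t -> phi s > 0.
Proof.
  intros Hw1 Hc H0 H1.
  set (E := fun s => 0 <= s <= w1 /\ forall r, 0 <= r <= s -> phi r > 0).
  assert (HE0 : E 0) by (split; [lra|]; intros r Hr; replace r with 0 by lra; auto).
  assert (Hb : bound E) by (exists w1; intros s [Hs _]; lra).
  destruct (completeness E Hb (ex_intro _ 0 HE0)) as [t [Hub Hlub]].
  assert (Ht0 : 0 <= t) by (apply Hub; auto).
  assert (Ht1 : t <= w1) by (apply Hlub; intros s [Hs _]; lra).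
  assert (Hbelow : forall s, 0 <= s < t -> phi s > 0).
  { intros s Hs. assert (~ is_upper_bound E s) as Hn by (intros Hu; specialize (Hlub s Hu); lra).
    apply not_all_ex_not in Hn. destruct Hn as [e He]. apply imply_to_and in He. destruct He as [[He1 He2] He3].
    apply He2. lra. }
  exists t. split; [lra|]. split; [|exact Hbelow].
  destruct (Rle_dec (phi t) 0) as [|Hpt]; [auto|exfalso].
  apply Rnot_le_gt in Hpt. destruct (cont_delta phi t (Hc t Ht0) Hpt) as [del [Hdel Hd]].
  destruct (Req_dec t w1) as [<-|Hne]; [lra|].
  set (s' := Rmin w1 (t + del / 2)).
  assert (Hs' : E s').
  { split. unfold s'; split; [apply Rmin_glb; lra|apply Rmin_l].
    intros r Hr. destruct (Rlt_dec r t) as [Hrt|Hrt]; [apply Hbelow; lra|].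
    apply Hd. assert (r <= t + del/2) by (apply Rle_trans with s'; [lra|apply Rmin_r]).
    apply Rabs_lt_between; lra. }
  specialize (Hub s' Hs'). unfold s' in Hub.
  unfold Rmin in Hub. destruct (Rle_dec w1 (t + del/2)); lra.
Qed.


Definition ODEh n p d lam (F : R -> R) := (forall w, 0 <= w -> is_derive F w (lam * gf n p d (F w) - F w)) /\ F 0 = lam.

Lemma deriv_cont u x l : is_derive u x l -> continuity_pt u x.
Proof. intros H. apply continuity_pt_filterlim. apply (ex_derive_continuous u x). exists l; exact H. Qed.

Lemma incr_lemma u du t : 0 <= t -> (forall x, 0 <= x <= t -> is_derive u x (du x)) ->
  (forall x, 0 <= x < t -> du x >= 0) -> u 0 <= u t.
Proof. intros Ht Hd Hs.
  destruct (MVT_gen u 0 t (fun x => if Rlt_dec x t then du x else 0)) as [c [Hc Heq]].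
  - intros x Hx. rewrite Rmin_left, Rmax_right in Hx by lra. destruct (Rlt_dec x t); [|lra]. apply Hd; lra.
  - intros x Hx. rewrite Rmin_left, Rmax_right in Hx by lra. apply (deriv_cont u x (du x)). apply Hd; lra.
  - rewrite Rmin_left, Rmax_right in Hc by lra. destruct (Rlt_dec c t) as [Hct|Hct].
    + specialize (Hs c (conj (proj1 Hc) Hct)). nra.
    + lra.
Qed.

Lemma decr_lemma u du t : 0 <= t -> (forall x, 0 <= x <= t -> is_derive u x (du x)) ->
  (forall x, 0 <= x < t -> du x <= 0) -> u t <= u 0.
Proof. intros Ht Hd Hs. assert (- u 0 <= - u t); [|lra].
  apply (incr_lemma (fun x => - u x) (fun x => - du x) t Ht).
  - intros x Hx. apply (is_derive_opp u x (du x)). apply Hd; auto.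
  - intros x Hx. specialize (Hs x Hx). lra. Qed.

Lemma Fstep n p d lam F t : HypP n p d -> 0 < lam < 1 -> ODEh n p d lam F -> 0 <= t ->
  (forall s, 0 <= s < t -> 0 < F s < 1) -> lam <= F t * exp t /\ F t * exp ((1 - lam) * t) <= lam.
Proof. intros Hh Hl [Hd H0] Ht Hs. split.
  - replace lam with (F 0 * exp 0) by (rewrite exp_0, H0; ring).
    apply (incr_lemma (fun w => F w * exp w) (fun w => (lam * gf n p d (F w) - F w) * exp w + F w * exp w) t Ht).
    + intros x Hx. exact (is_derive_mult F exp x _ _ (Hd x (proj1 Hx)) (is_derive_exp x) Rmult_comm).
    + intros x Hx. specialize (Hs x Hx). rewrite <- (qf_g n p d) by auto.
      destruct (qf_01 n p d (F x) Hh) as [Hq _]; [lra|]. pose proof (exp_pos x).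
      assert (0 <= lam * (F x * qf n p d (F x)) * exp x) by (repeat apply Rmult_le_pos; lra). nra.
  - replace lam with (F 0 * exp ((1 - lam) * 0)) at 2 by (rewrite Rmult_0_r, exp_0, H0; ring).
    apply (decr_lemma (fun w => F w * exp ((1-lam) * w)) (fun w => (lam * gf n p d (F w) - F w) * exp ((1-lam)*w) + F w * ((1-lam) * exp ((1-lam)*w))) t Ht).
    + intros x Hx. refine (is_derive_mult F (fun w => exp ((1-lam) * w)) x _ _ (Hd x (proj1 Hx)) _ Rmult_comm).
      auto_derive; [auto|ring].
    + intros x Hx. specialize (Hs x Hx). rewrite <- (qf_g n p d) by auto.
      destruct (qf_01 n p d (F x) Hh) as [_ Hq]; [lra|]. pose proof (exp_pos ((1-lam)*x)).
      assert (lam * F x * (qf n p d (F x) - 1) * exp ((1-lam)*x) <= 0).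
      { assert (0 <= lam * F x * (1 - qf n p d (F x)) * exp ((1-lam)*x)) by (repeat apply Rmult_le_pos; lra). nra. }
      nra.
Qed.

Lemma F_bounds n p d lam F : HypP n p d -> 0 < lam < 1 -> ODEh n p d lam F ->
  forall w, 0 <= w -> 0 < F w /\ F w * exp ((1 - lam) * w) <= lam.
Proof. intros Hh Hl Ho.
  assert (Hin : forall w, 0 <= w -> 0 < F w < 1).
  { intros w Hw. destruct (Rle_dec (F w * (1 - F w)) 0) as [Hle|Hgt].
    - exfalso. destruct (first_cross (fun w => F w * (1 - F w)) w Hw) as [t [Ht [Hpt Hb]]]; auto.
      + intros x Hx. destruct Ho as [Hd _]. pose proof (deriv_cont F x _ (Hd x Hx)).
        apply (continuity_pt_mult F (fun w => 1 - F w)); auto.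
        apply (continuity_pt_minus (fun _ => 1) F); auto. apply continuity_pt_const; intros a b; auto.
      + destruct Ho as [_ H0]. rewrite H0. nra.
      + destruct (Fstep n p d lam F t Hh Hl Ho (proj1 Ht)) as [Ha Hb'].
        * intros s Hs. specialize (Hb s Hs). simpl in Hb.
          destruct (Rlt_dec 0 (F s)); [split; auto; nra|]. nra.
        * pose proof (exp_pos t). pose proof (exp_pos ((1-lam)*t)).
          assert (1 <= exp ((1-lam)*t)) by (pose proof (exp_ineq1_le ((1-lam)*t)); nra).
          assert (0 < F t) by (destruct (Rlt_dec 0 (F t)); [auto|nra]).
          assert (F t < 1) by nra. simpl in Hpt. nra.
    - apply Rnot_le_gt in Hgt. destruct (Rlt_dec 0 (F w)); [split; auto; nra|]. nra. }
  intros w Hw. split; [apply Hin; auto|].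
  apply (Fstep n p d lam F w Hh Hl Ho Hw). intros s Hs; apply Hin; lra.
Qed.


Lemma lim_R_iff {T} (F : (T -> Prop) -> Prop) {FF : Filter F} (f : T -> R) l :
  filterlim f F (locally l) <-> forall eps : posreal, F (fun x => Rabs (f x - l) < eps).
Proof. rewrite filterlim_locally. split; intros H eps; specialize (H eps); exact H. Qed.

Lemma mk_RInt_gen (f I : R -> R) l : (forall T, 0 <= T -> is_RInt f 0 T (I T)) ->
  filterlim I (Rbar_locally p_infty) (locally l) -> is_RInt_gen f (at_point 0) (Rbar_locally p_infty) l.
Proof. intros HI Hl P HP. specialize (Hl P HP). destruct Hl as [M HM].
  apply (Filter_prod _ _ _ (fun x => x = 0) (fun T => Rmax 0 M < T)).
  - reflexivity.
  - exists (Rmax 0 M). auto.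
  - intros x y -> Hy. exists (I y). split.
    + apply HI. pose proof (Rmax_l 0 M). lra.
    + apply HM. pose proof (Rmax_r 0 M). lra.
Qed.

Definition phik n p d lam k x := x ^ k / (1 - lam * qf n p d x).
Definition Phik n p d lam k y := RInt (phik n p d lam k) 0 y.

Lemma den_pos n p d lam x : HypP n p d -> 0 < lam < 1 -> -1 <= x <= 1 -> 1 - lam * qf n p d x >= 1 - lam.
Proof. intros Hh Hl Hx. destruct (qf_abs1 n p d x Hh Hx). nra. Qed.

Lemma phik_cont n p d lam k x : HypP n p d -> 0 < lam < 1 -> -1 <= x <= 1 -> continuity_pt (phik n p d lam k) x.
Proof. intros Hh Hl Hx. unfold phik.
  apply (continuity_pt_div (fun x => x ^ k) (fun x => 1 - lam * qf n p d x)).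
  - apply pow_cont.
  - apply (continuity_pt_minus (fun _ => 1) (fun x => lam * qf n p d x)).
    + apply continuity_pt_const; intros a b; auto.
    + apply (continuity_pt_mult (fun _ => lam) (qf n p d)). apply continuity_pt_const; intros a b; auto. apply qf_cont.
  - pose proof (den_pos n p d lam x Hh Hl Hx). lra.
Qed.

Lemma phik_ex n p d lam k b : HypP n p d -> 0 < lam < 1 -> -1 <= b <= 1 -> ex_RInt (phik n p d lam k) 0 b.
Proof. intros Hh Hl Hb. apply (ex_RInt_continuous (V:=R_CompleteNormedModule)). intros z Hz. apply continuity_pt_filterlim.
  apply phik_cont; auto. destruct (Rle_dec 0 b).
  - rewrite Rmin_left, Rmax_right in Hz by lra. lra.
  - rewrite Rmin_right, Rmax_left in Hz by lra. lra. Qed.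

Lemma Phik_deriv n p d lam k y : HypP n p d -> 0 < lam < 1 -> -1 < y < 1 ->
  is_derive (Phik n p d lam k) y (phik n p d lam k y).
Proof. intros Hh Hl Hy. apply is_derive_RInt with 0.
  - assert (He : 0 < Rmin (1 - y) (y + 1)) by (apply Rmin_glb_lt; lra).
    exists (mkposreal _ He). intros b Hb. unfold Phik. apply RInt_correct. apply phik_ex; auto.
    change (Rabs (b - y) < Rmin (1 - y) (y + 1)) in Hb. apply Rabs_lt_between in Hb.
    pose proof (Rmin_l (1-y) (y+1)). pose proof (Rmin_r (1-y) (y+1)). lra.
  - apply continuity_pt_filterlim. apply phik_cont; auto; lra.
Qed.

Lemma Fk_int n p d lam F k T : HypP n p d -> 0 < lam < 1 -> ODEh n p d lam F -> 0 <= T ->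
  is_RInt (fun w => F w ^ S k) 0 T (Phik n p d lam k lam - Phik n p d lam k (F T)).
Proof. intros Hh Hl Ho HT. pose proof (F_bounds n p d lam F Hh Hl Ho) as HB. destruct Ho as [Hd H0].
  assert (Hin : forall w, 0 <= w -> 0 < F w < 1).
  { intros w Hw. destruct (HB w Hw) as [H1 H2]. split; auto.
    assert (1 <= exp ((1-lam)*w)) by (pose proof (exp_ineq1_le ((1-lam)*w)); nra). nra. }
  assert (E : minus (- Phik n p d lam k (F T)) (- Phik n p d lam k (F 0)) = Phik n p d lam k lam - Phik n p d lam k (F T))
    by (unfold minus, plus, opp; simpl; rewrite H0; ring).
  rewrite <- E. apply (is_RInt_derive (fun w => - Phik n p d lam k (F w)) (fun w => F w ^ S k)).
  - rewrite Rmin_left, Rmax_right by lra. intros x Hx.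
    destruct (Hin x (proj1 Hx)) as [Hf1 Hf2].
    pose proof (is_derive_comp (Phik n p d lam k) F x _ _ (Phik_deriv n p d lam k (F x) Hh Hl ltac:(lra)) (Hd x (proj1 Hx))) as Hc.
    pose proof (is_derive_opp _ x _ Hc) as Hc2.
    assert (Ev : opp (scal (lam * gf n p d (F x) - F x) (phik n p d lam k (F x))) = F x ^ S k).
    { unfold opp, scal; simpl. unfold mult; simpl. unfold phik. rewrite <- (qf_g n p d) by auto.
      pose proof (den_pos n p d lam (F x) Hh Hl ltac:(lra)). simpl. field. lra. }
    rewrite <- Ev. exact Hc2.
  - rewrite Rmin_left, Rmax_right by lra. intros x Hx. apply continuity_pt_filterlim.
    apply (continuity_pt_comp F (fun y => y ^ S k)). apply (deriv_cont F x _ (Hd x (proj1 Hx))). apply pow_cont.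
Qed.

Lemma F_lim0 n p d lam F : HypP n p d -> 0 < lam < 1 -> ODEh n p d lam F ->
  filterlim F (Rbar_locally p_infty) (locally 0).
Proof. intros Hh Hl Ho. apply (proj2 (lim_R_iff _ _ _)). intros eps. pose proof (cond_pos eps) as He.
  exists (Rmax 0 (- ln eps / (1 - lam))). intros T HT.
  pose proof (Rmax_l 0 (- ln eps / (1 - lam))). pose proof (Rmax_r 0 (- ln eps / (1 - lam))).
  destruct (F_bounds n p d lam F Hh Hl Ho T ltac:(lra)) as [H1 H2].
  assert (Hx : - ln eps < (1 - lam) * T).
  { assert (- ln eps / (1 - lam) < T) by lra. apply Rmult_lt_compat_l with (r := 1 - lam) in H3; [|lra].
    unfold Rdiv in H3. rewrite <- Rmult_assoc, (Rmult_comm (1-lam)), Rmult_assoc, Rinv_r, Rmult_1_r in H3; lra. }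
  apply exp_increasing in Hx. rewrite exp_Ropp, exp_ln in Hx by auto.
  assert (0 < / eps) by (apply Rinv_0_lt_compat; auto).
  assert (eps * / eps = 1) by (field; lra).
  rewrite Rminus_0_r, Rabs_pos_eq by lra.
  destruct (Rlt_dec (F T) eps) as [|Hn]; auto. exfalso.
  assert (F T * exp ((1 - lam) * T) >= eps * exp ((1 - lam) * T)) by (apply Rmult_ge_compat_r; [pose proof (exp_pos ((1-lam)*T)); lra|lra]).
  assert (eps * exp ((1 - lam) * T) > eps * / eps) by (apply Rmult_gt_compat_l; lra). lra.
Qed.

Lemma Fk_gen n p d lam F k : HypP n p d -> 0 < lam < 1 -> ODEh n p d lam F ->
  RInt_gen (fun w => F w ^ S k) (at_point 0) (Rbar_locally p_infty) = Phik n p d lam k lam.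
Proof. intros Hh Hl Ho. apply is_RInt_gen_unique.
  apply (mk_RInt_gen _ (fun T => Phik n p d lam k lam - Phik n p d lam k (F T))).
  - intros T HT. apply Fk_int; auto.
  - assert (HP0 : Phik n p d lam k 0 = 0) by (unfold Phik; apply (RInt_point (V:=R_CompleteNormedModule))).
    assert (Hc : filterlim (Phik n p d lam k) (locally 0) (locally 0)).
    { rewrite <- HP0 at 2. apply continuity_pt_filterlim. apply (deriv_cont _ _ _ (Phik_deriv n p d lam k 0 Hh Hl ltac:(lra))). }
    pose proof (filterlim_comp _ _ _ F (Phik n p d lam k) _ _ _ (F_lim0 n p d lam F Hh Hl Ho) Hc) as H.
    rewrite lim_R_iff. rewrite lim_R_iff in H. intros eps. specialize (H eps).
    revert H. apply filter_imp. intros x Hx. replace (Phik n p d lam k lam - Phik n p d lam k (F x) - Phik n p d lam k lam) with (- (Phik n p d lam k (F x) - 0)) by ring.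
    rewrite Rabs_Ropp. exact Hx.
    all: try exact _.
Qed.


Lemma is_RInt_sumI (m : nat) (p : nat -> R) (f : nat -> R -> R) (v : nat -> R) a b :
  (forall i, (i < m)%nat -> is_RInt (f i) a b (v i)) ->
  is_RInt (fun x => sumI m (fun i => p i * f i x)) a b (sumI m (fun i => p i * v i)).
Proof. induction m; intros H; simpl.
  - pose proof (is_RInt_const (V:=R_NormedModule) a b 0) as Hc.
    unfold scal in Hc; simpl in Hc; unfold mult in Hc; simpl in Hc. rewrite Rmult_0_r in Hc. exact Hc.
  - apply (is_RInt_plus (V:=R_NormedModule)).
    + apply IHm. intros; apply H; lia.
    + apply (is_RInt_scal (V:=R_NormedModule)). apply H; lia.
Qed.

Definition hf n p d lam x := qf n p d x / (1 - lam * qf n p d x).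

Lemma EW_int n p d lam F : HypP n p d -> 0 < lam < 1 -> ODEh n p d lam F ->
  is_RInt (hf n p d lam) 0 lam (EW n p d F).
Proof. intros Hh Hl Ho. unfold EW.
  rewrite (sumI_ext n _ (fun i => p i * Phik n p d lam (pred (d i)) lam)).
  2:{ intros i Hi. assert (Hd : (1 <= d i)%nat) by (destruct Hh as [_ [_ Hd]]; auto).
      replace (d i) with (S (pred (d i))) by lia. rewrite (Fk_gen n p d lam F (pred (d i)) Hh Hl Ho). 
      replace (S (pred (d i))) with (d i) by lia. reflexivity. }
  apply (is_RInt_ext (V:=R_NormedModule) (fun x => sumI n (fun i => p i * phik n p d lam (pred (d i)) x))).
  - intros x Hx. rewrite Rmin_left, Rmax_right in Hx by lra. unfold hf, phik, qf.
    rewrite (sumI_ext n _ (fun i => / (1 - lam * qf n p d x) * (p i * x ^ pred (d i)))) by (intros; unfold qf, Rdiv; ring).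
    rewrite sumI_scal. unfold qf, Rdiv. apply Rmult_comm.
  - apply is_RInt_sumI. intros i Hi. unfold Phik. apply (RInt_correct (V:=R_CompleteNormedModule)).
    apply phik_ex; auto; lra.
Qed.


Lemma RInt_ad (A f : R -> R) lam : 0 <= lam -> (forall x, 0 <= x <= lam -> is_derive A x (f x)) ->
  (forall x, 0 <= x <= lam -> ex_derive f x) -> is_RInt f 0 lam (A lam - A 0).
Proof. intros Hl Hd Hc. refine (is_RInt_derive (V:=R_CompleteNormedModule) A f 0 lam _ _).
  - rewrite Rmin_left, Rmax_right by lra. auto.
  - rewrite Rmin_left, Rmax_right by lra. intros x Hx. apply (ex_derive_continuous (K:=R_AbsRing) (V:=R_NormedModule)). auto.
Qed.

Lemma is_RInt_le' (f g : R -> R) a b If Ig : a <= b -> is_RInt f a b If -> is_RInt g a b Ig ->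
  (forall x, a < x < b -> f x <= g x) -> If <= Ig.
Proof. intros; eapply is_RInt_le; eauto. Qed.

Lemma is_RInt_scal_R (f : R -> R) a b k I : is_RInt f a b I -> is_RInt (fun x => k * f x) a b (k * I).
Proof. intros H. exact (is_RInt_scal (V:=R_NormedModule) f a b k I H). Qed.

Lemma is_RInt_plus_R (f g : R -> R) a b I J : is_RInt f a b I -> is_RInt g a b J -> is_RInt (fun x => f x + g x) a b (I + J).
Proof. intros H1 H2. exact (is_RInt_plus (V:=R_NormedModule) f g a b I J H1 H2). Qed.

Definition Qv n p d lam := sumI n (fun i => p i * (lam ^ d i / INR (d i))).

Lemma Q_int n p d lam : HypP n p d -> 0 <= lam -> is_RInt (qf n p d) 0 lam (Qv n p d lam).
Proof. intros Hh Hl. unfold qf, Qv. apply is_RInt_sumI. intros i Hi.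
  assert (Hd : (1 <= d i)%nat) by (destruct Hh as [_ [_ Hd]]; auto).
  destruct (d i) as [|k]; [lia|]. simpl pred.
  assert (HI : INR k + 1 > 0) by (pose proof (pos_INR k); lra).
  assert (E : match k with | 0%nat => 1 | S _ => INR k + 1 end = INR k + 1) by (destruct k; simpl; lra).
  replace (lam ^ S k / INR (S k)) with (lam ^ S k / (INR k + 1) - 0 ^ S k / (INR k + 1))
    by (rewrite pow_i by lia; rewrite S_INR; unfold Rdiv; ring).
  apply (RInt_ad (fun x => x ^ S k / (INR k + 1))); auto.
  - intros x Hx. auto_derive; auto. rewrite E. field. lra.
  - intros x Hx. auto_derive. auto.
Qed.

Lemma EW_small n p d lam I : HypP n p d -> 0 < lam < 1 -> is_RInt (hf n p d lam) 0 lam I ->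
  Qv n p d lam <= I <= Qv n p d lam / (1 - lam).
Proof. intros Hh Hl HI. pose proof (Q_int n p d lam Hh ltac:(lra)) as HQ. split.
  - apply (is_RInt_le' _ _ 0 lam _ _ ltac:(lra) HQ HI). intros x Hx. unfold hf.
    destruct (qf_01 n p d x Hh ltac:(lra)). set (q := qf n p d x) in *.
    assert (0 < 1 - lam * q <= 1) by nra. unfold Rdiv. 
    assert (1 <= / (1 - lam * q)) by (rewrite <- Rinv_1; apply Rinv_le_contravar; lra). nra.
  - pose proof (is_RInt_scal_R _ 0 lam (/ (1 - lam)) _ HQ) as HQ2.
    replace (Qv n p d lam / (1 - lam)) with (/ (1 - lam) * Qv n p d lam) by (unfold Rdiv; ring).
    apply (is_RInt_le' _ _ 0 lam _ _ ltac:(lra) HI HQ2). intros x Hx. unfold hf.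
    destruct (qf_01 n p d x Hh ltac:(lra)). set (q := qf n p d x) in *.
    assert (1 - lam <= 1 - lam * q) by nra.
    assert (/ (1 - lam * q) <= / (1 - lam)) by (apply Rinv_le_contravar; lra).
    unfold Rdiv. nra.
Qed.

Lemma EW_low1 n p d lam I : HypP n p d -> 0 < lam < 1 -> 0 < mq n p d -> is_RInt (hf n p d lam) 0 lam I ->
  (ln (1 - lam + mq n p d) - ln ((1 - lam) * (1 + mq n p d))) / mq n p d - lam <= I.
Proof. intros Hh Hl Hm HI. set (m := mq n p d) in *.
  assert (HA : is_RInt (fun x => / ((1 - lam) + m * (1 - x)) - 1) 0 lam
     ((- ln ((1 - lam) + m * (1 - lam)) / m - lam) - (- ln ((1 - lam) + m * (1 - 0)) / m - 0))).
  { apply (RInt_ad (fun x => - ln ((1 - lam) + m * (1 - x)) / m - x)); [lra| |].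
    - intros x Hx. auto_derive. nra. replace (1 + - x) with (1 - x) by ring. field. split; [|lra]. nra.
    - intros x Hx. auto_derive. nra. }
  replace ((ln (1 - lam + m) - ln ((1 - lam) * (1 + m))) / m - lam) with
     ((- ln ((1 - lam) + m * (1 - lam)) / m - lam) - (- ln ((1 - lam) + m * (1 - 0)) / m - 0))
    by (replace ((1 - lam) + m * (1 - lam)) with ((1 - lam) * (1 + m)) by ring;
        replace (1 - lam + m * (1 - 0)) with (1 - lam + m) by ring; field; lra).
  apply (is_RInt_le' _ _ 0 lam _ _ ltac:(lra) HA HI). intros x Hx. unfold hf.
  destruct (qf_01 n p d x Hh ltac:(lra)). pose proof (qf_up n p d x Hh ltac:(lra)).
  fold m in H1. set (q := qf n p d x) in *.
  assert (0 < 1 - lam * q) by nra.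
  assert (1 - lam * q <= 1 - lam + m * (1 - x)) by nra.
  assert (/ (1 - lam + m * (1 - x)) <= / (1 - lam * q)) by (apply Rinv_le_contravar; lra).
  assert (/ (1 - lam * q) - 1 <= q / (1 - lam * q)).
  { apply Rmult_le_reg_r with (1 - lam * q); [lra|]. unfold Rdiv.
    rewrite Rmult_minus_distr_r, Rinv_l, Rmult_assoc, Rinv_l by lra. nra. }
  lra.
Qed.

Lemma EW_up1 n p d lam I c x0 : HypP n p d -> 0 < lam < 1 -> 0 < c -> 0 <= x0 < 1 ->
  (forall x, x0 <= x <= 1 -> c * (1 - x) <= 1 - qf n p d x) -> 0 < 1 - qf n p d x0 ->
  is_RInt (hf n p d lam) 0 lam I ->
  I <= / lam * ((ln (1 - lam + c) - ln ((1 - lam) * (1 + c))) / c + lam / (1 - qf n p d x0)).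
Proof. intros Hh Hl Hc Hx0 Hq HD HI. set (D' := 1 - qf n p d x0) in *.
  assert (HA : is_RInt (fun x => / lam * (/ ((1 - lam) + c * (1 - x)) + / D')) 0 lam
     (/ lam * (- ln ((1 - lam) + c * (1 - lam)) / c + lam / D') - / lam * (- ln ((1 - lam) + c * (1 - 0)) / c + 0 / D'))).
  { apply (RInt_ad (fun x => / lam * (- ln ((1 - lam) + c * (1 - x)) / c + x / D'))); [lra| |].
    - intros x Hx. auto_derive. nra. replace (1 + - x) with (1 - x) by ring. field. split; [lra|]. split; [nra|]. split; lra.
    - intros x Hx. auto_derive. nra. }
  replace (/ lam * ((ln (1 - lam + c) - ln ((1 - lam) * (1 + c))) / c + lam / D')) with
     (/ lam * (- ln ((1 - lam) + c * (1 - lam)) / c + lam / D') - / lam * (- ln ((1 - lam) + c * (1 - 0)) / c + 0 / D'))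
    by (replace ((1 - lam) + c * (1 - lam)) with ((1 - lam) * (1 + c)) by ring;
        replace (1 - lam + c * (1 - 0)) with (1 - lam + c) by ring; field; lra).
  apply (is_RInt_le' _ _ 0 lam _ _ ltac:(lra) HI HA). intros x Hx. unfold hf.
  destruct (qf_01 n p d x Hh ltac:(lra)). set (q := qf n p d x) in *.
  assert (HDp : 0 < 1 - lam * q) by nra.
  assert (q / (1 - lam * q) <= / (1 - lam * q)) by (unfold Rdiv; pose proof (Rinv_0_lt_compat _ HDp); nra).
  assert (Hb : 1 - lam * q >= lam * ((1 - lam) + (1 - q))) by nra.
  assert (0 < / D') by (apply Rinv_0_lt_compat; lra).
  assert (0 < / lam) by (apply Rinv_0_lt_compat; lra).
  destruct (Rle_dec x0 x) as [Hle|Hlt].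
  - specialize (Hq x ltac:(lra)). fold q in Hq.
    assert (HE : 0 < (1 - lam) + c * (1 - x)) by nra.
    assert (/ (1 - lam * q) <= / (lam * ((1 - lam) + c * (1 - x)))) by (apply Rinv_le_contravar; nra).
    rewrite Rinv_mult in H4. assert (0 < / (1 - lam + c * (1 - x))) by (apply Rinv_0_lt_compat; lra). nra.
  - assert (q <= qf n p d x0) by (apply qf_mono; auto; lra).
    assert (/ (1 - lam * q) <= / (lam * D')) by (apply Rinv_le_contravar; unfold D' in *; nra).
    rewrite Rinv_mult in H5. assert (0 < / (1 - lam + c * (1 - x))) by (apply Rinv_0_lt_compat; nra). nra.
Qed.


Lemma at_left_intro x (P : R -> Prop) del : 0 < del -> (forall y, x - del < y < x -> P y) -> at_left x P.
Proof. intros Hd H. exists (mkposreal _ Hd). intros y Hy Hlt. change (Rabs (y - x) < del) in Hy.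
  apply Rabs_lt_between in Hy. apply H. lra. Qed.

Lemma at_right_intro x (P : R -> Prop) del : 0 < del -> (forall y, x < y < x + del -> P y) -> at_right x P.
Proof. intros Hd H. exists (mkposreal _ Hd). intros y Hy Hlt. change (Rabs (y - x) < del) in Hy.
  apply Rabs_lt_between in Hy. apply H. lra. Qed.

Lemma P_bounds n p d lam : HypP n p d -> 0 < lam < 1 ->
  1 - lam <= 1 - gf n p d lam <= (1 + mq n p d) * (1 - lam).
Proof. intros Hh Hl. rewrite <- qf_g by auto. destruct (qf_01 n p d lam Hh ltac:(lra)).
  pose proof (qf_up n p d lam Hh ltac:(lra)). split; nra. Qed.

Lemma Qv_nn n p d lam : HypP n p d -> 0 <= lam -> 0 <= Qv n p d lam.
Proof. intros Hh Hl. unfold Qv. apply Rle_trans with (sumI n (fun _ => 0)). { clear. induction n; simpl; lra. }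
  apply sumI_le; intros i Hi. pose proof (hp_nn _ _ _ Hh i Hi).
  assert (Hd : (1 <= d i)%nat) by (destruct Hh as [_ [_ Hd]]; auto).
  assert (0 < INR (d i)) by (apply lt_0_INR; lia). pose proof (pow_le lam (d i) Hl).
  apply Rmult_le_pos; auto. apply Rdiv_le_0_compat; lra. Qed.

Lemma ln_pos_lt x : 1 < x -> 0 < ln x.
Proof. intros. rewrite <- ln_1. apply ln_increasing; lra. Qed.

Lemma lim_one n p d (F : R -> R -> R) : HypP n p d -> 0 < mq n p d ->
  (forall lam, 0 < lam < 1 -> ODEh n p d lam (F lam)) ->
  filterlim (fun lam => - EW n p d (F lam) / ln (plam n p d lam)) (at_left 1) (locally (1 / mq n p d)).
Proof. intros Hh Hm Ho. rewrite lim_R_iff. intros eps. pose proof (cond_pos eps) as He.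
  set (e := pos eps) in *. set (m := mq n p d) in *.
  set (l1 := ln (1 + m)). assert (Hl1 : 0 < l1) by (apply ln_pos_lt; lra).
  set (a := ln (1 + m) - ln m).
  assert (Ha : 0 < a) by (unfold a; assert (ln m < ln (1 + m)) by (apply ln_increasing; lra); lra).
  set (c := m / (1 + m * e / 3)).
  assert (Hme : 0 < m * e) by (apply Rmult_lt_0_compat; lra).
  assert (Hc : 0 < c) by (unfold c; apply Rdiv_lt_0_compat; lra).
  assert (Hcm : c < m) by (assert (c * (1 + m * e / 3) = m) by (unfold c; field; lra); nra).
  assert (Hic : / c = / m + e / 3) by (unfold c; field; split; lra).
  set (S := S2 n p d). assert (HS : 0 <= S) by apply S2_nn, Hh.
  set (del := Rmin (1/2) ((m - c) / (S + 1))).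
  assert (Hdel : 0 < del) by (apply Rmin_glb_lt; [lra|apply Rdiv_lt_0_compat; lra]).
  assert (Hdel1 : del <= 1/2) by apply Rmin_l.
  assert (Hdel2 : del * S <= m - c).
  { assert (del <= (m - c) / (S + 1)) by apply Rmin_r.
    assert (del * (S + 1) <= m - c) by (apply Rmult_le_reg_r with (/ (S + 1)); [apply Rinv_0_lt_compat; lra|];
       rewrite Rmult_assoc, Rinv_r by lra; lra). nra. }
  set (x0 := 1 - del).
  assert (Hq : forall x, x0 <= x <= 1 -> c * (1 - x) <= 1 - qf n p d x).
  { intros x Hx. pose proof (qf_low n p d x Hh ltac:(unfold x0 in Hx; lra)). fold m S in H.
    assert ((1 - x) * S <= m - c) by (unfold x0 in Hx; nra). nra. }
  assert (HD : 0 < 1 - qf n p d x0) by (pose proof (Hq x0 ltac:(unfold x0; lra)); unfold x0 in *; nra).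
  set (B := / (1 - qf n p d x0)). assert (HB : 0 < B) by (apply Rinv_0_lt_compat; lra).
  set (kap := / m + 2 * e / 3).
  assert (Hkap : 0 < kap) by (unfold kap; pose proof (Rinv_0_lt_compat m Hm); lra).
  set (lam1 := (/ m + e / 3) / kap).
  assert (Hlam1 : 0 < lam1 < 1).
  { unfold lam1. pose proof (Rinv_0_lt_compat m Hm). split. apply Rdiv_lt_0_compat; lra.
    apply Rmult_lt_reg_r with kap; auto. unfold Rdiv. rewrite Rmult_assoc, Rinv_l by lra. unfold kap. lra. }
  set (M := Rmax (Rmax ((a / m + 1) / e) l1) ((B + (/ m + e) * l1) / (e / 3)) + 1).
  assert (HM1 : (a / m + 1) / e < M) by (unfold M; pose proof (Rmax_l (Rmax ((a / m + 1) / e) l1) ((B + (/ m + e) * l1) / (e / 3))); pose proof (Rmax_l ((a / m + 1) / e) l1); lra).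
  assert (HM2 : l1 < M) by (unfold M; pose proof (Rmax_l (Rmax ((a / m + 1) / e) l1) ((B + (/ m + e) * l1) / (e / 3))); pose proof (Rmax_r ((a / m + 1) / e) l1); lra).
  assert (HM3 : (B + (/ m + e) * l1) / (e / 3) < M) by (unfold M; pose proof (Rmax_r (Rmax ((a / m + 1) / e) l1) ((B + (/ m + e) * l1) / (e / 3))); lra).
  apply (at_left_intro 1 _ (Rmin (1 - lam1) (exp (- M)))).
  { apply Rmin_glb_lt; [lra|apply exp_pos]. }
  intros lam Hlam. pose proof (Rmin_l (1 - lam1) (exp (- M))). pose proof (Rmin_r (1 - lam1) (exp (- M))).
  assert (Hl : 0 < lam < 1) by lra. assert (Hll1 : lam1 < lam) by lra.
  set (L := - ln (1 - lam)).
  assert (HL : M < L).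
  { unfold L. assert (ln (1 - lam) < ln (exp (- M))) by (apply ln_increasing; lra). rewrite ln_exp in H1. lra. }
  pose proof (EW_int n p d lam (F lam) Hh Hl (Ho lam Hl)) as HI. set (I := EW n p d (F lam)) in *.
  assert (HI0 : 0 <= I) by (destruct (EW_small n p d lam I Hh Hl HI); pose proof (Qv_nn n p d lam Hh ltac:(lra)); lra).
  pose proof (EW_low1 n p d lam I Hh Hl Hm HI) as Hlow. fold m in Hlow.
  pose proof (EW_up1 n p d lam I c x0 Hh Hl Hc ltac:(unfold x0; lra) Hq HD HI) as Hup. fold B in Hup.
  assert (Hln1 : ln ((1 - lam) * (1 + m)) = - L + l1) by (unfold L, l1; rewrite ln_mult; [ring|lra|lra]).
  assert (Hln2 : ln ((1 - lam) * (1 + c)) = - L + ln (1 + c)) by (unfold L; rewrite ln_mult; [ring|lra|lra]).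
  assert (Hln3 : ln m <= ln (1 - lam + m)) by (apply ln_le; lra).
  assert (Hln4 : ln (1 - lam + c) <= ln (1 + c)) by (apply ln_le; lra).
  rewrite Hln1 in Hlow. rewrite Hln2 in Hup.
  assert (Hlow' : (L - a) / m - 1 <= I).
  { eapply Rle_trans; [|exact Hlow]. unfold a, l1 in *. unfold Rdiv. apply Rplus_le_compat; [|lra].
    apply Rmult_le_compat_r; [left; apply Rinv_0_lt_compat; lra|]. lra. }
  assert (Hup' : I <= L * (/ lam * / c) + B).
  { eapply Rle_trans; [exact Hup|]. unfold Rdiv. fold B.
    replace (/ lam * ((ln (1 - lam + c) - (- L + ln (1 + c))) * / c + lam * B)) with
       (/ lam * / c * (ln (1 - lam + c) - ln (1 + c)) + L * (/ lam * / c) + B) by (field; lra).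
    assert (0 < / lam * / c) by (apply Rmult_lt_0_compat; apply Rinv_0_lt_compat; lra).
    assert (/ lam * / c * (ln (1 - lam + c) - ln (1 + c)) <= 0) by (apply Rmult_le_0_l; lra). lra. }
  assert (Hlc : / lam * / c <= kap).
  { rewrite Hic. apply Rmult_le_reg_l with lam; [lra|]. rewrite <- Rmult_assoc, Rinv_r, Rmult_1_l by lra.
    unfold lam1 in Hll1. apply Rmult_lt_compat_r with (r := kap) in Hll1; [|lra].
    unfold Rdiv in Hll1. rewrite Rmult_assoc, Rinv_l, Rmult_1_r in Hll1 by lra. lra. }
  unfold plam. change (sumI n (fun i => p i * lam ^ d i)) with (gf n p d lam).
  destruct (P_bounds n p d lam Hh Hl) as [Hg1 Hg2]. fold m in Hg2.
  assert (HP1 : ln (1 - lam) <= ln (1 - gf n p d lam)) by (apply ln_le; lra).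
  assert (HP2 : ln (1 - gf n p d lam) <= ln ((1 + m) * (1 - lam))) by (apply ln_le; lra).
  rewrite Rmult_comm, Hln1 in HP2.
  set (P := - ln (1 - gf n p d lam)).
  assert (HPpos : 0 < P) by (unfold P, L in *; lra).
  replace (- I / ln (1 - gf n p d lam)) with (I / P) by (unfold P; field; lra).
  set (r := I / P). assert (HrI : r * P = I) by (unfold r; field; lra).
  assert (Hr0 : 0 <= r) by (unfold r; apply Rdiv_le_0_compat; lra).
  assert (HeL1 : a / m + 1 < e * L).
  { assert (E : a / m + 1 = ((a / m + 1) / e) * e) by (field; lra). rewrite E.
    assert (0 < (L - (a / m + 1) / e) * e) by (apply Rmult_lt_0_compat; lra). nra. }
  assert (HeL2 : B + (/ m + e) * l1 < e / 3 * L).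
  { assert (E : B + (/ m + e) * l1 = ((B + (/ m + e) * l1) / (e / 3)) * (e / 3)) by (field; lra). rewrite E.
    assert (0 < (L - (B + (/ m + e) * l1) / (e / 3)) * (e / 3)) by (apply Rmult_lt_0_compat; lra). nra. }
  assert (Him : m * / m = 1) by (field; lra). pose proof (Rinv_0_lt_compat m Hm) as Him0.
  assert (HaM : a / m = a * / m) by reflexivity.
  apply Rabs_lt_between. unfold Rdiv at 1. rewrite Rmult_1_l. split.
  -
    assert (HPL : P <= L) by (unfold P, L in *; lra).
    assert (r * P <= r * L) by (apply Rmult_le_compat_l; lra).
    assert (r * L >= (L - a) * / m - 1) by (unfold Rdiv in Hlow'; lra).
    assert (Hk : r * L > (/ m - e) * L).
    { assert ((L - a) * / m - 1 = L * / m - (a / m + 1)) by (unfold Rdiv; ring). lra. } apply Rmult_gt_reg_r in Hk; [lra|lra].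
  -
    assert (HPL : L - l1 <= P) by (unfold P, L in *; lra).
    assert (r * (L - l1) <= r * P) by (apply Rmult_le_compat_l; lra).
    assert (L * (/ lam * / c) <= L * kap) by (apply Rmult_le_compat_l; lra).
    assert (r * (L - l1) <= kap * L + B) by lra.
    assert (kap * L + B < (/ m + e) * (L - l1)) by (unfold kap; lra).
    assert (Hk : r * (L - l1) < (/ m + e) * (L - l1)) by lra. apply Rmult_lt_reg_r in Hk; lra.
  - exact _.
Qed.


Lemma ln_le_xm1 x : 0 < x -> ln x <= x - 1.
Proof. intros. pose proof (exp_ineq1_le (ln x)). rewrite exp_ln in H0 by auto. lra. Qed.

Definition gt n p d j lam := sumI n (fun i => p i * lam ^ (d i - d j)).
Definition Qt n p d j lam := sumI n (fun i => p i * (lam ^ (d i - d j) / INR (d i))).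


Lemma pow_split lam a b : (b <= a)%nat -> lam ^ b * lam ^ (a - b) = lam ^ a.
Proof. intros. rewrite <- pow_add. f_equal. lia. Qed.

Lemma gt_eq n p d j lam : (forall i k, (i < k)%nat -> (k < n)%nat -> (d i < d k)%nat) ->
  (forall i, (i < j)%nat -> p i = 0) -> lam ^ d j * gt n p d j lam = gf n p d lam.
Proof. intros Hinc Hmin. unfold gt, gf. rewrite <- sumI_scal. apply sumI_ext. intros i Hi.
  destruct (Nat.lt_ge_cases i j) as [Hij|Hij]. { rewrite Hmin by auto. ring. }
  assert (d j <= d i)%nat by (destruct (Nat.eq_dec i j) as [->|Hne]; [lia|]; assert (d j < d i)%nat by (apply Hinc; lia); lia).
  rewrite <- (pow_split lam (d i) (d j)) by auto. ring. Qed.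

Lemma Qt_eq n p d j lam : (forall i k, (i < k)%nat -> (k < n)%nat -> (d i < d k)%nat) ->
  (forall i, (i < j)%nat -> p i = 0) -> lam ^ d j * Qt n p d j lam = Qv n p d lam.
Proof. intros Hinc Hmin. unfold Qt, Qv. rewrite <- sumI_scal. apply sumI_ext. intros i Hi.
  destruct (Nat.lt_ge_cases i j) as [Hij|Hij]. { rewrite Hmin by auto. unfold Rdiv; ring. }
  assert (d j <= d i)%nat by (destruct (Nat.eq_dec i j) as [->|Hne]; [lia|]; assert (d j < d i)%nat by (apply Hinc; lia); lia).
  rewrite <- (pow_split lam (d i) (d j)) by auto. unfold Rdiv; ring. Qed.

Lemma gt_0 n p d j : (j < n)%nat -> (forall i k, (i < k)%nat -> (k < n)%nat -> (d i < d k)%nat) ->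
  (forall i, (i < j)%nat -> p i = 0) -> gt n p d j 0 = p j.
Proof. intros Hj Hinc Hmin. unfold gt. rewrite (sumI_single n _ j Hj).
  - rewrite Nat.sub_diag. simpl. ring.
  - intros i Hi Hne. destruct (Nat.lt_ge_cases i j) as [Hij|Hij]. { rewrite Hmin by auto. ring. }
    assert (d j < d i)%nat by (apply Hinc; lia). rewrite pow_i by lia. ring. Qed.

Lemma Qt_0 n p d j : (j < n)%nat -> (forall i k, (i < k)%nat -> (k < n)%nat -> (d i < d k)%nat) ->
  (forall i, (i < j)%nat -> p i = 0) -> Qt n p d j 0 = p j / INR (d j).
Proof. intros Hj Hinc Hmin. unfold Qt. rewrite (sumI_single n _ j Hj).
  - rewrite Nat.sub_diag. simpl. unfold Rdiv; ring.
  - intros i Hi Hne. destruct (Nat.lt_ge_cases i j) as [Hij|Hij]. { rewrite Hmin by auto. unfold Rdiv; ring. }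
    assert (d j < d i)%nat by (apply Hinc; lia). rewrite pow_i by lia. unfold Rdiv; ring. Qed.

Lemma sumI_ge_term n f j : (forall i, (i < n)%nat -> 0 <= f i) -> (j < n)%nat -> f j <= sumI n f.
Proof. induction n; simpl; intros H Hj; [lia|].
  assert (0 <= sumI n f).
  { apply Rle_trans with (sumI n (fun _ => 0)). { clear. induction n; simpl; lra. } apply sumI_le; intros; apply H; lia. }
  destruct (Nat.eq_dec j n) as [->|Hne]; [lra|].
  assert (f j <= sumI n f) by (apply IHn; [intros; apply H; lia|lia]). assert (0 <= f n) by (apply H; lia). lra. Qed.

Lemma gt_ge n p d j lam : HypP n p d -> (j < n)%nat -> 0 <= lam -> p j <= gt n p d j lam.
Proof. intros Hh Hj Hl. unfold gt. replace (p j) with (p j * lam ^ (d j - d j)) by (rewrite Nat.sub_diag; simpl; ring).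
  apply (sumI_ge_term n (fun i => p i * lam ^ (d i - d j))); auto.
  intros i Hi. pose proof (hp_nn _ _ _ Hh i Hi). pose proof (pow_le lam (d i - d j) Hl). nra. Qed.

Lemma poly_cont n (c : nat -> R) (k : nat -> nat) x : continuity_pt (fun y => sumI n (fun i => c i * y ^ k i)) x.
Proof. apply (sumI_cont n (fun i y => c i * y ^ k i)). intros i _.
  apply (continuity_pt_mult (fun _ => c i) (fun y => y ^ k i)). apply continuity_pt_const; intros a b; auto. apply pow_cont. Qed.

Lemma frac_le a b c e : 0 < b -> 0 < e -> a * e <= c * b -> a / b <= c / e.
Proof. intros Hb He H. apply Rmult_le_reg_r with (b * e); [nra|].
  replace (a / b * (b * e)) with (a * e) by (field; lra). replace (c / e * (b * e)) with (c * b) by (field; lra). lra. Qed.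

Lemma cont_right f : continuity_pt f 0 -> filterlim f (at_right 0) (locally (f 0)).
Proof. intros H. rewrite lim_R_iff. intros eps. destruct (proj1 (continuity_pt_locally f 0) H eps) as [del Hd].
  exists del. intros y Hy _. apply Hd; auto. exact _. Qed.

Lemma lim_zero n p d j (F : R -> R -> R) : HypP n p d ->
  (forall i k, (i < k)%nat -> (k < n)%nat -> (d i < d k)%nat) -> (j < n)%nat -> p j > 0 ->
  (forall i, (i < j)%nat -> p i = 0) ->
  (forall lam, 0 < lam < 1 -> ODEh n p d lam (F lam)) ->
  filterlim (fun lam => - EW n p d (F lam) / ln (plam n p d lam)) (at_right 0) (locally (1 / INR (d j))).
Proof. intros Hh Hinc Hj Hpj Hmin Ho.
  assert (Hdj : 0 < INR (d j)) by (apply lt_0_INR; destruct Hh as [_ [_ Hd]]; specialize (Hd j Hj); lia).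
  set (lo := fun lam => Qt n p d j lam * (1 - gf n p d lam) / gt n p d j lam).
  set (hi := fun lam => Qt n p d j lam / ((1 - lam) * gt n p d j lam)).
  assert (Hg0 : gf n p d 0 = 0).
  { unfold gf. rewrite (sumI_ext n _ (fun _ => 0)). { clear. induction n; simpl; lra. }
    intros i Hi. destruct Hh as [_ [_ Hd]]. rewrite pow_i by (specialize (Hd i Hi); lia). ring. }
  assert (Hgt0 := gt_0 n p d j Hj Hinc Hmin). assert (HQt0 := Qt_0 n p d j Hj Hinc Hmin).
  assert (Hcq : continuity_pt (Qt n p d j) 0).
  { unfold Qt. apply (continuity_pt_ext (fun y => sumI n (fun i => (p i / INR (d i)) * y ^ (d i - d j)))).
    intros y. apply sumI_ext. intros; unfold Rdiv; ring. apply poly_cont. }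
  assert (Hcg : continuity_pt (gt n p d j) 0) by apply poly_cont.
  assert (Hcgf : continuity_pt (gf n p d) 0) by apply poly_cont.
  apply (filterlim_le_le (F := at_right 0) lo _ hi (Finite (1 / INR (d j)))).
  - apply (at_right_intro 0 _ (1/2)); [lra|]. intros lam Hlam. assert (Hl : 0 < lam < 1) by lra.
    pose proof (EW_int n p d lam (F lam) Hh Hl (Ho lam Hl)) as HI. set (I := EW n p d (F lam)) in *.
    destruct (EW_small n p d lam I Hh Hl HI) as [HI1 HI2].
    pose proof (gt_eq n p d j lam Hinc Hmin) as Hge. pose proof (Qt_eq n p d j lam Hinc Hmin) as HQe.
    pose proof (gt_ge n p d j lam Hh Hj ltac:(lra)) as Hgtp.
    assert (HX : 0 < lam ^ d j) by (apply pow_lt; lra).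
    set (g := gf n p d lam) in *. set (X := lam ^ d j) in *.
    assert (Hgpos : 0 < g) by (rewrite <- Hge; apply Rmult_lt_0_compat; lra).
    destruct (P_bounds n p d lam Hh Hl) as [Hb1 _]. fold g in Hb1.
    assert (HP1 : ln (1 - g) <= - g) by (pose proof (ln_le_xm1 (1 - g) ltac:(lra)); lra).
    assert (HP2 : - ln (1 - g) <= g / (1 - g)).
    { pose proof (ln_le_xm1 (/ (1 - g)) ltac:(apply Rinv_0_lt_compat; lra)). rewrite ln_Rinv in H by lra.
      replace (g / (1 - g)) with (/ (1 - g) - 1) by (field; lra). lra. }
    unfold plam. change (sumI n (fun i => p i * lam ^ d i)) with g.
    set (P := - ln (1 - g)) in *. assert (HPpos : 0 < P) by (unfold P; lra). assert (HPg : g <= P) by (unfold P; lra).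
    replace (- I / ln (1 - g)) with (I / P) by (unfold P; field; lra).
    assert (HQnn : 0 <= Qv n p d lam) by (apply Qv_nn; auto; lra).
    split.
    + unfold lo. fold g. replace (Qt n p d j lam * (1 - g) / gt n p d j lam) with (Qv n p d lam * (1 - g) / g)
        by (rewrite <- Hge, <- HQe; field; lra).
      apply frac_le; auto.
      assert ((1 - g) * P <= g) by (apply Rmult_le_reg_r with (/ (1 - g)); [apply Rinv_0_lt_compat; lra|];
          replace ((1 - g) * P * / (1 - g)) with P by (field; lra); unfold Rdiv in HP2; lra).
      assert (Qv n p d lam * ((1 - g) * P) <= Qv n p d lam * g) by (apply Rmult_le_compat_l; auto).
      assert (Qv n p d lam * g <= I * g) by (apply Rmult_le_compat_r; lra). nra.
    + unfold hi. replace (Qt n p d j lam / ((1 - lam) * gt n p d j lam)) with (Qv n p d lam / ((1 - lam) * g))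
        by (rewrite <- Hge, <- HQe; field; lra).
      apply frac_le; auto. nra.
      assert (I * (1 - lam) <= Qv n p d lam) by (apply Rmult_le_reg_r with (/ (1 - lam)); [apply Rinv_0_lt_compat; lra|];
          replace (I * (1 - lam) * / (1 - lam)) with I by (field; lra); unfold Rdiv in HI2; lra).
      assert (g <= P) by exact HPg.
      assert (0 <= I) by lra. nra.
  - replace (Finite (1 / INR (d j))) with (Finite (lo 0)).
    + apply cont_right. unfold lo. apply continuity_pt_div.
      apply continuity_pt_mult; auto. apply continuity_pt_minus; auto. apply continuity_pt_const; intros a b; auto.
      auto. rewrite Hgt0. lra.
    + unfold lo. rewrite Hg0, Hgt0, HQt0. f_equal. field. lra.
  - replace (Finite (1 / INR (d j))) with (Finite (hi 0)).
    + apply cont_right. unfold hi. apply continuity_pt_div. auto.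
      apply continuity_pt_mult; auto. apply continuity_pt_minus; auto. apply continuity_pt_const; intros a b; auto.
      apply continuity_pt_id.
      rewrite Hgt0. lra.
    + unfold hi. rewrite Hgt0, HQt0. f_equal. field. lra.
Qed.


Theorem proposition5p3
  (n : nat) (p : nat -> R) (d : nat -> nat) (j : nat)
  (F : R -> R -> R)
  (hp_nonneg : forall i, (i < n)%nat -> 0 <= p i)
  (hp_sum : sumI n p = 1)
  (hd1 : forall i, (i < n)%nat -> (1 <= d i)%nat)
  (hd_incr : forall i k, (i < k)%nat -> (k < n)%nat -> (d i < d k)%nat)
  (hmean : sumI n (fun i => p i * INR (d i)) > 1)
  (hj : (j < n)%nat) (hpj : p j > 0)
  (hjmin : forall i, (i < j)%nat -> p i = 0)
  (hF_ode : forall lam, 0 < lam < 1 -> forall w, 0 <= w ->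
      is_derive (F lam) w
        (lam * sumI n (fun i => p i * F lam w ^ d i) - F lam w))
  (hF_init : forall lam, 0 < lam < 1 -> F lam 0 = lam) :
  filterlim (fun lam => - EW n p d (F lam) / ln (plam n p d lam))
            (at_right 0) (locally (1 / INR (d j)))
  /\
  filterlim (fun lam => - EW n p d (F lam) / ln (plam n p d lam))
            (at_left 1)
            (locally (1 / (sumI n (fun i => p i * INR (d i)) - 1))).
Proof.
  assert (Hh : HypP n p d) by (split; [auto|split; auto]).
  assert (Ho : forall lam, 0 < lam < 1 -> ODEh n p d lam (F lam)) by (intros lam Hl; split; [apply hF_ode; auto|apply hF_init; auto]).
  split.
  - apply (lim_zero n p d j F Hh hd_incr hj hpj hjmin Ho).
  - rewrite <- (mq_eq n p d Hh). apply (lim_one n p d F Hh); auto.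
    rewrite (mq_eq n p d Hh). lra.
Qed.
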